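(* Let $\mathfrak n$ be the $7$-dimensional real Lie algebra with basis $\{u_1,u_2,z,v_1,v_2,e_1,e_2\}$ whose only nonzero brackets (up to antisymmetry) are $[e_1,e_2]=z$, $[v_1,v_2]=z$, $[e_1,v_1]=u_1$, $[e_2,v_1]=u_2$, $[e_1,v_2]=u_2$, $[e_2,v_2]=-u_1$, and let $N$ be the corresponding simply connected Lie group with the left-invariant pseudo-Riemannian metric whose only nonzero inner products on basis vectors are $\langle u_i,v_j\rangle=\delta_{ij}$, $\langle z,z\rangle=\varepsilon$, $\langle e_a,e_a\rangle=\bar\varepsilon_a$ ($a=1,2$), where $\varepsilon,\bar\varepsilon_1,\bar\varepsilon_2\in\{1,-1\}$. Then this metric is not a nilsoliton.
   Context: $\mathrm{Ric}$ denotes the Ricci operator of the left-invariant metric ($\langle\mathrm{Ric}\,x,y\rangle=\varrho(x,y)$, $\varrho$ the Ricci tensor). The metric is a nilsoliton if $\mathrm{Ric}=c\cdot\mathrm{Id}+D$ for some $c\in\mathbb R$ and some derivation $D$ of $\mathfrak n$. *)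

(* Defs.v *)
(* Left-invariant metrics on a Lie algebra given in coordinates:
   vectors of the n-dimensional Lie algebra are row vectors 'rV[R]_n in a fixed
   basis bv 0, ..., bv (n-1); linear maps act on the right: x |-> x *m M. *)
From HB Require Import structures.
From mathcomp Require Import all_boot all_order all_algebra.
From mathcomp Require Import all_classical all_reals.
Set Implicit Arguments. Unset Strict Implicit. Unset Printing Implicit Defensive.
Import Order.TTheory GRing.Theory Num.Theory.
Local Open Scope ring_scope.

Section LieMetric.
Variables (R : realType) (n : nat).

Definition bv (k : 'I_n) : 'rV[R]_n := \row_j (j == k)%:R.

(* bracket extended bilinearly from structure constants C i j = [b_i, b_j] *)
Definition br (C : 'I_n -> 'I_n -> 'rV[R]_n) (x y : 'rV[R]_n) : 'rV[R]_n :=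
  \sum_i \sum_j (x 0 i * y 0 j) *: C i j.

Definition ip (g : 'M[R]_n) (x y : 'rV[R]_n) : R := (x *m g *m y^T) 0 0.

(* Levi-Civita connection (Koszul formula) of the left-invariant metric:
   2 <nabla_x y, w> = <[x,y],w> - <[y,w],x> + <[w,x],y>. *)
Definition lc C g (x y : 'rV[R]_n) : 'rV[R]_n :=
  ((2 : R)^-1 *: \row_k (ip g (br C x y) (bv k) - ip g (br C y (bv k)) x
                          + ip g (br C (bv k) x) y)) *m invmx g.

Definition curv C g (x y z : 'rV[R]_n) : 'rV[R]_n :=
  lc C g x (lc C g y z) - lc C g y (lc C g x z) - lc C g (br C x y) z.

Definition ricci_form C g (y z : 'rV[R]_n) : R :=
  \sum_i (curv C g (bv i) y z) 0 i.

(* Ricci operator: <Ric x, y> = rho(x,y), i.e. x Ric g y^T = x P y^T *)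
Definition ricci_op C g : 'M[R]_n :=
  (\matrix_(i, j) ricci_form C g (bv i) (bv j)) *m invmx g.

Definition is_derivation C (D : 'M[R]_n) : Prop :=
  forall x y, br C x y *m D = br C (x *m D) y + br C x (y *m D).

Definition nilsoliton C g : Prop :=
  exists (c : R) (D : 'M[R]_n), is_derivation C D /\ ricci_op C g = c%:M + D.

End LieMetric.

(* The 7-dimensional example; basis order: 0=u1,1=u2,2=z,3=v1,4=v2,5=e1,6=e2 *)
Definition nbv (R : realType) (k : nat) : 'rV[R]_7 := \row_j ((j : nat) == k)%:R.

Definition brN (R : realType) (i j : 'I_7) : 'rV[R]_7 :=
  match nat_of_ord i, nat_of_ord j with
  | 5, 6 => nbv R 2 | 6, 5 => - nbv R 2      (* [e1,e2] = z *)
  | 3, 4 => nbv R 2 | 4, 3 => - nbv R 2      (* [v1,v2] = z *)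
  | 5, 3 => nbv R 0 | 3, 5 => - nbv R 0      (* [e1,v1] = u1 *)
  | 6, 3 => nbv R 1 | 3, 6 => - nbv R 1      (* [e2,v1] = u2 *)
  | 5, 4 => nbv R 1 | 4, 5 => - nbv R 1      (* [e1,v2] = u2 *)
  | 6, 4 => - nbv R 0 | 4, 6 => nbv R 0      (* [e2,v2] = -u1 *)
  | _, _ => 0
  end.

Definition gN (R : realType) (eps eb1 eb2 : R) : 'M[R]_7 :=
  \matrix_(i, j)
    match nat_of_ord i, nat_of_ord j with
    | 0, 3 | 3, 0 | 1, 4 | 4, 1 => 1
    | 2, 2 => eps
    | 5, 5 => eb1
    | 6, 6 => eb2
    | _, _ => 0
    end.

(* Main.v *)
Require Import Defs.
From HB Require Import structures.
From mathcomp Require Import all_boot all_order all_algebra.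
From mathcomp Require Import all_classical all_reals.
From mathcomp Require Import ring lra.
Set Implicit Arguments. Unset Strict Implicit. Unset Printing Implicit Defensive.
Import Order.TTheory GRing.Theory Num.Theory.
Local Open Scope ring_scope.


Section Gen.
Variables (R : realType) (n : nat) (C : 'I_n -> 'I_n -> 'rV[R]_n) (g : 'M[R]_n).

Lemma bvE (k l : 'I_n) : bv R k 0 l = (nat_of_ord l == nat_of_ord k)%:R.
Proof. by rewrite mxE. Qed.

Lemma br_bvr x j : br C x (bv R j) = \sum_i x 0 i *: C i j.
Proof.
rewrite /br; apply: eq_bigr => i _; rewrite (bigD1 j) //= big1 ?addr0.
  by rewrite mxE eqxx mulr1.
by move=> k /negbTE kj; rewrite mxE kj mulr0 scale0r.
Qed.

Lemma br_bvl j y : br C (bv R j) y = \sum_i y 0 i *: C j i.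
Proof.
rewrite /br (bigD1 j) //= [X in _ + X]big1 ?addr0.
  by apply: eq_bigr => i _; rewrite mxE eqxx mul1r.
by move=> k /negbTE kj; apply: big1 => i _; rewrite mxE kj mul0r scale0r.
Qed.

Lemma br_bv i j : br C (bv R i) (bv R j) = C i j.
Proof.
rewrite br_bvl (bigD1 j) //= big1 ?addr0; first by rewrite mxE eqxx scale1r.
by move=> k /negbTE kj; rewrite mxE kj scale0r.
Qed.

Lemma brZl a x y : br C (a *: x) y = a *: br C x y.
Proof.
rewrite /br scaler_sumr; apply: eq_bigr => i _; rewrite scaler_sumr.
by apply: eq_bigr => j _; rewrite mxE scalerA mulrA.
Qed.

Lemma brZr a x y : br C x (a *: y) = a *: br C x y.
Proof.
rewrite /br scaler_sumr; apply: eq_bigr => i _; rewrite scaler_sumr.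
by apply: eq_bigr => j _; rewrite mxE scalerA mulrCA.
Qed.

Lemma ipZl a x y : ip g (a *: x) y = a * ip g x y.
Proof. by rewrite /ip -!scalemxAl mxE. Qed.

Lemma ipZr a x y : ip g x (a *: y) = a * ip g x y.
Proof. by rewrite /ip linearZ /= -!scalemxAr mxE. Qed.

Lemma lcZl a x y : lc C g (a *: x) y = a *: lc C g x y.
Proof.
rewrite /lc -!scalemxAl scalerA mulrC -scalerA; congr (_ *: _).
rewrite scalemxAl; congr (_ *m _).
apply/rowP => k; rewrite !mxE brZl brZr !ipZl ipZr.
by rewrite mulrDr mulrBr.
Qed.

Lemma lcZr a x y : lc C g x (a *: y) = a *: lc C g x y.
Proof.
rewrite /lc -!scalemxAl scalerA mulrC -scalerA; congr (_ *: _).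
rewrite scalemxAl; congr (_ *m _).
apply/rowP => k; rewrite !mxE brZl brZr !ipZl ipZr.
by rewrite mulrDr mulrBr.
Qed.

Lemma lc0r x : lc C g x 0 = 0.
Proof. by have := lcZr 0 x 0; rewrite !scale0r. Qed.
Lemma lc0l x : lc C g 0 x = 0.
Proof. by have := lcZl 0 0 x; rewrite !scale0r. Qed.
Lemma lcNl x y : lc C g (- x) y = - lc C g x y.
Proof. by rewrite -scaleN1r lcZl scaleN1r. Qed.

Lemma bvmul (i j : 'I_n) (M : 'M[R]_n) : (bv R i *m M) 0 j = M i j.
Proof.
rewrite mxE (bigD1 i) //= big1 ?addr0; first by rewrite mxE eqxx mul1r.
by move=> k /negbTE kj; rewrite mxE kj mul0r.
Qed.

End Gen.

Lemma ip_bvr (R : realType) (n : nat) (g : 'M[R]_n) x k :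
  ip g x (bv R k) = (x *m g) 0 k.
Proof.
rewrite /ip mxE (bigD1 k) //= big1 ?addr0; first by rewrite !mxE eqxx mulr1.
by move=> b /negbTE bk; rewrite !mxE bk mulr0.
Qed.


Definition o0 : 'I_7 := @Ordinal 7 0 isT.
Definition o1 : 'I_7 := @Ordinal 7 1 isT.
Definition o2 : 'I_7 := @Ordinal 7 2 isT.
Definition o3 : 'I_7 := @Ordinal 7 3 isT.
Definition o4 : 'I_7 := @Ordinal 7 4 isT.
Definition o5 : 'I_7 := @Ordinal 7 5 isT.
Definition o6 : 'I_7 := @Ordinal 7 6 isT.

Lemma sum7 (V : nmodType) (F : 'I_7 -> V) :
  \sum_i F i = F o0 + F o1 + F o2 + F o3 + F o4 + F o5 + F o6.
Proof.
rewrite !big_ord_recl big_ord0 addr0 !addrA; repeat congr (_ + _); congr F; exact: val_inj.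
Qed.

Section Conc.
Variables (R : realType) (eps eb1 eb2 : R).

Definition GamN (i j : 'I_7) : 'rV[R]_7 :=
  match nat_of_ord i, nat_of_ord j with
  | 2, 3 => ((-1%:R / 2%:R) * eps) *: bv R (o1)
  | 2, 4 => ((1%:R / 2%:R) * eps) *: bv R (o0)
  | 2, 5 => ((-1%:R / 2%:R) * eps * eb2) *: bv R (o6)
  | 2, 6 => ((1%:R / 2%:R) * eps * eb1) *: bv R (o5)
  | 3, 2 => ((-1%:R / 2%:R) * eps) *: bv R (o1)
  | 3, 3 => (1%:R * eb1) *: bv R (o5)
  | 3, 4 => ((1%:R / 2%:R) * eps * eps) *: bv R (o2)
  | 3, 5 => ((- 1%:R)) *: bv R (o0)
  | 4, 2 => ((1%:R / 2%:R) * eps) *: bv R (o0)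
  | 4, 3 => ((-1%:R / 2%:R) * eps * eps) *: bv R (o2)
  | 4, 4 => (1%:R * eb1) *: bv R (o5)
  | 4, 5 => ((- 1%:R)) *: bv R (o1)
  | 5, 2 => ((-1%:R / 2%:R) * eps * eb2) *: bv R (o6)
  | 5, 6 => ((1%:R / 2%:R) * eps * eps) *: bv R (o2)
  | 6, 2 => ((1%:R / 2%:R) * eps * eb1) *: bv R (o5)
  | 6, 3 => (1%:R) *: bv R (o1)
  | 6, 4 => ((- 1%:R)) *: bv R (o0)
  | 6, 5 => ((-1%:R / 2%:R) * eps * eps) *: bv R (o2)
  | _, _ => 0
  end.

Definition CLN (a b c : nat) : R :=
  match a, b, c with
  | 5, 6, 2 => eps | 6, 5, 2 => - eps
  | 3, 4, 2 => eps | 4, 3, 2 => - eps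
  | 5, 3, 3 => 1 | 3, 5, 3 => -1
  | 6, 3, 4 => 1 | 3, 6, 4 => -1
  | 5, 4, 4 => 1 | 4, 5, 4 => -1
  | 6, 4, 3 => -1 | 4, 6, 3 => 1
  | _, _, _ => 0
  end.

Lemma nbv0 : nbv R 0 = bv R o0. Proof. by apply/rowP => j; rewrite !mxE. Qed.
Lemma nbv1 : nbv R 1 = bv R o1. Proof. by apply/rowP => j; rewrite !mxE. Qed.
Lemma nbv2 : nbv R 2 = bv R o2. Proof. by apply/rowP => j; rewrite !mxE. Qed.
Lemma nbv3 : nbv R 3 = bv R o3. Proof. by apply/rowP => j; rewrite !mxE. Qed.
Lemma nbv4 : nbv R 4 = bv R o4. Proof. by apply/rowP => j; rewrite !mxE. Qed.
Lemma nbv5 : nbv R 5 = bv R o5. Proof. by apply/rowP => j; rewrite !mxE. Qed.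
Lemma nbv6 : nbv R 6 = bv R o6. Proof. by apply/rowP => j; rewrite !mxE. Qed.

Lemma bvmulN (i j : 'I_7) (M : 'M[R]_7) : ((- bv R i) *m M) 0 j = - M i j.
Proof. by rewrite mulNmx mxE bvmul. Qed.

Lemma CLv (a b c : 'I_7) : ip (gN eps eb1 eb2) (brN R a b) (bv R c) = CLN a b c.
Proof.
rewrite ip_bvr.
case: a => [[|[|[|[|[|[|[|a]]]]]]] Ha] //;
case: b => [[|[|[|[|[|[|[|b]]]]]]] Hb] //; cbn [brN nat_of_ord CLN];
rewrite ?mul0mx ?nbv0 ?nbv1 ?nbv2 ?nbv3 ?nbv4 ?nbv5 ?nbv6 ?bvmulN ?bvmul !mxE //;
case: c => [[|[|[|[|[|[|[|c]]]]]]] Hc] //.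
all: cbn [nat_of_ord o0 o1 o2 o3 o4 o5 o6]; rewrite ?opprK ?oppr0 //.
Qed.

Hypothesis hinv : invmx (gN eps eb1 eb2) = gN eps eb1 eb2.

Lemma GamE (i j : 'I_7) : lc (@brN R) (gN eps eb1 eb2) (bv R i) (bv R j) = GamN i j.
Proof.
rewrite /lc hinv; apply/rowP => m; rewrite -scalemxAl mxE [X in _ * X]mxE sum7 !mxE !br_bv !CLv.
case: i => [[|[|[|[|[|[|[|i]]]]]]] Hi] //;
case: j => [[|[|[|[|[|[|[|j]]]]]]] Hj] //;
cbn [CLN nat_of_ord o0 o1 o2 o3 o4 o5 o6 GamN]; rewrite ?mxE;
case: m => [[|[|[|[|[|[|[|m]]]]]]] Hm] //;
cbn [nat_of_ord o0 o1 o2 o3 o4 o5 o6 eq_op]; rewrite ?mulr1n ?mulr0n; try field.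
all: done.
Qed.

Lemma rf30 : ricci_form (@brN R) (gN eps eb1 eb2) (bv R o3) (bv R o0) = 0.
Proof.
rewrite /ricci_form sum7 /curv !GamE; cbn [GamN nat_of_ord o0 o1 o2 o3 o4 o5 o6];
rewrite ?lcZr ?lc0r !br_bv; cbn [brN nat_of_ord o0 o1 o2 o3 o4 o5 o6];
rewrite ?nbv0 ?nbv1 ?nbv2 ?nbv3 ?nbv4 ?nbv5 ?nbv6 ?lcNl ?lc0l !GamE;
cbn [GamN nat_of_ord o0 o1 o2 o3 o4 o5 o6]; rewrite !mxE;
cbn [nat_of_ord o0 o1 o2 o3 o4 o5 o6 eq_op]; rewrite ?mulr1n ?mulr0n; by field.
Qed.
Lemma rf41 : ricci_form (@brN R) (gN eps eb1 eb2) (bv R o4) (bv R o1) = 0.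
Proof.
rewrite /ricci_form sum7 /curv !GamE; cbn [GamN nat_of_ord o0 o1 o2 o3 o4 o5 o6];
rewrite ?lcZr ?lc0r !br_bv; cbn [brN nat_of_ord o0 o1 o2 o3 o4 o5 o6];
rewrite ?nbv0 ?nbv1 ?nbv2 ?nbv3 ?nbv4 ?nbv5 ?nbv6 ?lcNl ?lc0l !GamE;
cbn [GamN nat_of_ord o0 o1 o2 o3 o4 o5 o6]; rewrite !mxE;
cbn [nat_of_ord o0 o1 o2 o3 o4 o5 o6 eq_op]; rewrite ?mulr1n ?mulr0n; by field.
Qed.
Lemma rf55 : ricci_form (@brN R) (gN eps eb1 eb2) (bv R o5) (bv R o5) = - (eps * eb2) / 2.
Proof.
rewrite /ricci_form sum7 /curv !GamE; cbn [GamN nat_of_ord o0 o1 o2 o3 o4 o5 o6];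
rewrite ?lcZr ?lc0r !br_bv; cbn [brN nat_of_ord o0 o1 o2 o3 o4 o5 o6];
rewrite ?nbv0 ?nbv1 ?nbv2 ?nbv3 ?nbv4 ?nbv5 ?nbv6 ?lcNl ?lc0l !GamE;
cbn [GamN nat_of_ord o0 o1 o2 o3 o4 o5 o6]; rewrite !mxE;
cbn [nat_of_ord o0 o1 o2 o3 o4 o5 o6 eq_op]; rewrite ?mulr1n ?mulr0n; by field.
Qed.
Lemma rf66 : ricci_form (@brN R) (gN eps eb1 eb2) (bv R o6) (bv R o6) = - (eps * eb1) / 2.
Proof.
rewrite /ricci_form sum7 /curv !GamE; cbn [GamN nat_of_ord o0 o1 o2 o3 o4 o5 o6];
rewrite ?lcZr ?lc0r !br_bv; cbn [brN nat_of_ord o0 o1 o2 o3 o4 o5 o6];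
rewrite ?nbv0 ?nbv1 ?nbv2 ?nbv3 ?nbv4 ?nbv5 ?nbv6 ?lcNl ?lc0l !GamE;
cbn [GamN nat_of_ord o0 o1 o2 o3 o4 o5 o6]; rewrite !mxE;
cbn [nat_of_ord o0 o1 o2 o3 o4 o5 o6 eq_op]; rewrite ?mulr1n ?mulr0n; by field.
Qed.

End Conc.

Lemma gN_inv (R : realType) (eps eb1 eb2 : R) :
  eps * eps = 1 -> eb1 * eb1 = 1 -> eb2 * eb2 = 1 ->
  invmx (gN eps eb1 eb2) = gN eps eb1 eb2.
Proof.
move=> h0 h1 h2.
have gg : gN eps eb1 eb2 *m gN eps eb1 eb2 = 1%:M.
  apply/matrixP => i j; rewrite !mxE sum7 !mxE.
  case: i => [[|[|[|[|[|[|[|i]]]]]]] Hi] //;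
  case: j => [[|[|[|[|[|[|[|j]]]]]]] Hj] //=;
  rewrite ?mul0r ?mulr0 ?mul1r ?mulr1 ?add0r ?addr0 //.
have [u _] := mulmx1_unit gg.
by rewrite -[invmx _]mulmx1 -gg mulmxA mulVmx // mul1mx.
Qed.

Unset Implicit Arguments. Set Strict Implicit.


Theorem mainTheorem5 (R : realType) (eps eb1 eb2 : R) :
  (eps = 1 \/ eps = -1) -> (eb1 = 1 \/ eb1 = -1) -> (eb2 = 1 \/ eb2 = -1) ->
  ~ nilsoliton (@brN R) (gN eps eb1 eb2).
Proof.
move=> he h1 h2 [c [D [hD hR]]].
have sq (x : R) : x = 1 \/ x = -1 -> x * x = 1.
  by case=> ->; rewrite ?mulr1 ?mulrNN ?mulr1.
have hinv := gN_inv (sq _ he) (sq _ h1) (sq _ h2).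
have hDE : D = ricci_op (@brN R) (gN eps eb1 eb2) - c%:M by rewrite hR addrC addKr.
have Dd (a : 'I_7) : D a a = ricci_op (@brN R) (gN eps eb1 eb2) a a - c.
  by rewrite hDE !mxE eqxx mulr1n.
have k1 := congr1 (fun M : 'rV[R]_7 => M 0 o2) (hD (bv R o5) (bv R o6)).
have k2 := congr1 (fun M : 'rV[R]_7 => M 0 o2) (hD (bv R o3) (bv R o4)).
move: k1 k2; rewrite /= !br_bv; cbn [brN nat_of_ord o0 o1 o2 o3 o4 o5 o6].
rewrite nbv2 br_bvr br_bvl br_bvr br_bvl !bvmul !mxE ?summxE ?sum7 !bvmul.
cbn [brN nat_of_ord o0 o1 o2 o3 o4 o5 o6]; rewrite !mxE.
cbn [nat_of_ord o0 o1 o2 o3 o4 o5 o6 eq_op]; rewrite ?mulr1n ?mulr0n.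
rewrite !Dd /ricci_op hinv !mxE !sum7 !mxE.
cbn [nat_of_ord o0 o1 o2 o3 o4 o5 o6].
rewrite (rf30 hinv) (rf41 hinv) (rf55 hinv) (rf66 hinv).
move: (ricci_form (brN R) (gN eps eb1 eb2)) (D) => rfm DD.
move=> k1 k2.
have E := etrans (esym k1) k2.
move/eqP: E; rewrite -subr_eq0 => /eqP E.
have : -(eps * eb1 * eb2) = 0.
  by rewrite -E; field.
case: he h1 h2 => -> [] -> [] ->; lra.
Qed.
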